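(* Let $A$ be a deterministic KAT automaton over $(\Sigma_0,T)$ and let $\mathfrak{s}$ assign to each $p\in\Sigma_0$ a deterministic KAT automaton $\mathfrak{s}(p)$ over $(\Sigma_1,T)$. Then $L(\mathsf{compose}^{\mathfrak{s}}(A))=\mathrm{apply}^{\mathfrak{s}'}(L(A))$, where $\mathfrak{s}'(p)=L(\mathfrak{s}(p))$.
   Context: Atoms $\mathsf{At}_T=2^T$. Guarded strings: words in $\mathsf{At}_T(\Sigma\mathsf{At}_T)^*$; guarded composition $w'\alpha\diamond\alpha x'=w'\alpha x'$ (defined only when the last atom of the left string equals the first atom of the right one). For a guarded language $L$ over $(\Sigma_0,T)$ and $\mathfrak{s}'$ mapping each $p\in\Sigma_0$ to a guarded language over $(\Sigma_1,T)$, $\mathrm{apply}^{\mathfrak{s}'}(L)$ is the set of all $\alpha_0\diamond w_0\diamond\alpha_1\diamond\cdots\diamond\alpha_{n-1}\diamond w_{n-1}\diamond\alpha_n$ (defined) where $\alpha_0p_0\alpha_1\cdots p_{n-1}\alpha_n\in L$ and each $w_i\in\mathfrak{s}'(p_i)$. Deterministic KAT automaton over $(\Sigma,T)$: $A=(Q,\delta,\iota)$, $Q$ finite, $\delta:Q\times\mathsf{At}_T\to\{\mathsf{accept},\mathsf{reject}\}+\Sigma\times Q$, $\iota:\mathsf{At}_T\to\{\mathsf{accept},\mathsf{reject}\}+\Sigma\times Q$. $L_A(\gamma)$ is the smallest set with $\gamma(\alpha)=\mathsf{accept}\Rightarrow\alpha\in L_A(\gamma)$ and $\gamma(\alpha)=(p,q)$,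 $w\in L_A(\delta(q,-))\Rightarrow\alpha pw\in L_A(\gamma)$; $L(A)=L_A(\iota)$. $\mathsf{compose}^{\mathfrak{s}}(A)$ for $A=(Q,\delta,\iota)$ and $\mathfrak{s}(p)=(Q_p,\delta_p,\iota_p)$: $\hat\delta(q,\alpha)=\mathsf{accept}$ if $\delta(q,\alpha)=\mathsf{accept}$; $=(p,q')$ if $\delta(q,\alpha)=(p,q')$ and $\iota_p(\alpha)\ne\mathsf{accept}$; $=\hat\delta(q',\alpha)$ if $\delta(q,\alpha)=(p,q')$ and $\iota_p(\alpha)=\mathsf{accept}$; $=\mathsf{reject}$ otherwise (including when the recursion does not terminate). $\hat\iota(\alpha)=\hat\delta(q,\alpha)$ if $\iota(\alpha)=(p,q)$ and $\iota_p(\alpha)=\mathsf{accept}$; else $\hat\iota(\alpha)=\iota(\alpha)$. Then $\mathsf{compose}^{\mathfrak{s}}(A)=(Q',\delta',\iota')$ over $(\Sigma_1,T)$, $Q'=\sum_{p\in\Sigma_0}Q_p\times Q$, with, for $q_p\in Q_p$, $q\in Q$: $\delta'((q_p,q),\alpha)=(p'',(q_p',q))$ if $\delta_p(q_p,\alpha)=(p'',q_p')$; $=(p'',(q_{p'},q'))$ if $\delta_p(q_p,\alpha)=\mathsf{accept}$, $\hat\delta(q,\alpha)=(p',q')$ and $\iota_{p'}(\alpha)=(p'',q_{p'})$; $=\mathsf{accept}$ if $\delta_p(q_p,\alpha)=\mathsf{accept}$ and $\hat\delta(q,\alpha)=\mathsf{accept}$; $=\mathsf{reject}$ otherwise. $\iota'(\alpha)=\mathsf{accept}$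 if $\hat\iota(\alpha)=\mathsf{accept}$; $=(p'',(q_{p'},q))$ if $\hat\iota(\alpha)=(p',q)$ and $\iota_{p'}(\alpha)=(p'',q_{p'})$; $=\mathsf{reject}$ otherwise. *)

(* Defs.v *)
From Stdlib Require Import ClassicalEpsilon.
From mathcomp Require Import all_boot.
From Stdlib Require List.
Set Implicit Arguments.
Unset Strict Implicit.
Unset Printing Implicit Defensive.

Section KAT.
Variables (T : finType).

Definition atom := {set T}.

(* Guarded strings over (Sigma, T): alpha_0 p_0 alpha_1 ... p_{n-1} alpha_n,
   represented as the first atom and the list of pairs (p_i, alpha_{i+1}). *)
Record gstring (Sigma : Type) := GS { ghead : atom; gtail : seq (Sigma * atom) }.

Definition glast (Sigma : Type) (x : gstring Sigma) : atom :=
  last (ghead x) (map snd (gtail x)).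

Definition gatom (Sigma : Type) (a : atom) : gstring Sigma := GS a [::].

Definition gcomp (Sigma : Type) (x y : gstring Sigma) : option (gstring Sigma) :=
  if glast x == ghead y then Some (GS (ghead x) (gtail x ++ gtail y)) else None.

Definition glang (Sigma : Type) := gstring Sigma -> Prop.

(* apply^{s'}(L): all defined alpha_0 <> w_0 <> alpha_1 <> ... <> w_{n-1} <> alpha_n
   with alpha_0 p_0 alpha_1 ... p_{n-1} alpha_n in L and w_i in s'(p_i). *)
Definition compose_all (S0 S1 : Type) (x : gstring S0) (ws : seq (gstring S1))
  : option (gstring S1) :=
  foldl (fun acc (pw : (S0 * atom) * gstring S1) =>
           obind (fun a => obind (fun b => gcomp b (gatom S1 pw.1.2)) (gcomp a pw.2)) acc)
        (Some (gatom S1 (ghead x))) (zip (gtail x) ws).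

Definition apply_subst (S0 S1 : Type) (s' : S0 -> glang S1) (L : glang S0) : glang S1 :=
  fun y => exists (x : gstring S0) (ws : seq (gstring S1)),
    [/\ L x, size ws = size (gtail x),
        List.Forall (fun pw : (S0 * atom) * gstring S1 => s' pw.1.1 pw.2) (zip (gtail x) ws)
      & compose_all x ws = Some y].

Inductive res (Sigma Q : Type) := Accept | Reject | Step of Sigma & Q.
Arguments Accept {Sigma Q}.
Arguments Reject {Sigma Q}.

Record kat_aut (Sigma : Type) := KatAut {
  kstate : finType;
  kdelta : kstate -> atom -> res Sigma kstate;
  kiota : atom -> res Sigma kstate }.

Inductive lang_from (Sigma : Type) (Q : Type) (delta : Q -> atom -> res Sigma Q)
  : (atom -> res Sigma Q) -> gstring Sigma -> Prop :=
| lang_accept (gamma : atom -> res Sigma Q) (a : atom) :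
    gamma a = Accept -> lang_from delta gamma (GS a [::])
| lang_step (gamma : atom -> res Sigma Q) (a : atom) (p : Sigma) (q : Q) (w : gstring Sigma) :
    gamma a = Step p q -> lang_from delta (delta q) w ->
    lang_from delta gamma (GS a ((p, ghead w) :: gtail w)).

Definition L (Sigma : Type) (A : kat_aut Sigma) : glang Sigma :=
  lang_from (@kdelta _ A) (@kiota _ A).

Section Compose.
Variables (S0 S1 : finType) (s : S0 -> kat_aut S1) (A : kat_aut S0).

Definition is_accept (Sigma Q : Type) (r : res Sigma Q) : bool :=
  if r is Accept then true else false.

(* n steps of the recursion defining \hat\delta; None = not yet terminated. *)
Fixpoint hat_fuel (n : nat) (q : kstate A) (a : atom) : option (res S0 (kstate A)) :=
  match n with
  | 0 => None
  | n'.+1 =>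
    match kdelta q a with
    | Accept => Some Accept
    | Step p q' => if is_accept (kiota (s p) a) then hat_fuel n' q' a
                   else Some (Step p q')
    | Reject => Some Reject
    end
  end.

Definition hat_delta (q : kstate A) (a : atom) : res S0 (kstate A) :=
  match excluded_middle_informative
          (exists nr : nat * res S0 (kstate A), hat_fuel nr.1 q a = Some nr.2) with
  | left H => (proj1_sig (constructive_indefinite_description _ H)).2
  | right _ => Reject
  end.

Definition hat_iota (a : atom) : res S0 (kstate A) :=
  match kiota A a with
  | Step p q => if is_accept (kiota (s p) a) then hat_delta q a else kiota A a
  | r => r
  end.

Definition cstate : finType := {p : S0 & (kstate (s p) * kstate A)%type}.

Definition cdelta (x : cstate) (a : atom) : res S1 cstate :=
  let p := tag x in
  let qp := (tagged x).1 in
  let q := (tagged x).2 in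
  match kdelta qp a with
  | Step p'' qp' => Step p'' (Tagged (fun p => (kstate (s p) * kstate A)%type) (qp', q))
  | Accept =>
    match hat_delta q a with
    | Accept => Accept
    | Step p' q' =>
      match kiota (s p') a with
      | Step p'' qp'' => Step p'' (Tagged (fun p => (kstate (s p) * kstate A)%type) (qp'', q'))
      | _ => Reject
      end
    | Reject => Reject
    end
  | Reject => Reject
  end.

Definition ciota (a : atom) : res S1 cstate :=
  match hat_iota a with
  | Accept => Accept
  | Step p' q =>
    match kiota (s p') a with
    | Step p'' qp => Step p'' (Tagged (fun p => (kstate (s p) * kstate A)%type) (qp, q))
    | _ => Reject
    end
  | Reject => Reject
  end.

Definition compose : kat_aut S1 := @KatAut S1 cstate cdelta ciota.

End Compose.
End KAT.

(* Main.v *)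
Require Import Defs.
From Stdlib Require Import ClassicalEpsilon.
From mathcomp Require Import all_boot.
From Stdlib Require List.
Set Implicit Arguments.
Unset Strict Implicit.
Unset Printing Implicit Defensive.
Arguments Accept {Sigma Q}.
Arguments Reject {Sigma Q}.

Section Gen.
Variable T : finType.

Lemma lang_nil (Sigma Q : Type) (d : Q -> atom T -> res Sigma Q) g a :
  lang_from d g (GS a [::]) <-> g a = Accept.
Proof.
split; first by move=> H; inversion H.
by move=> H; constructor.
Qed.

Lemma lang_cons (Sigma Q : Type) (d : Q -> atom T -> res Sigma Q) g a p b t :
  lang_from d g (GS a ((p, b) :: t)) <-> exists q, g a = Step p q /\ lang_from d (d q) (GS b t).
Proof.
split.
  move=> H; inversion H; subst. exists q; split=> //.
  by case: w H H6.
by case=> q [H1 H2]; apply: (lang_step (w := GS b t)) H1 H2.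
Qed.

Variables S0 S1 : Type.

Definition F := (fun acc (pw : (S0 * atom T) * gstring T S1) =>
           obind (fun a => obind (fun b => gcomp b (gatom S1 pw.1.2)) (gcomp a pw.2)) acc).

Lemma foldF_None l : foldl F None l = None.
Proof. by elim: l. Qed.

Lemma glast_cat a t1 t2 :
  glast (GS a (t1 ++ t2) : gstring T S1) = glast (GS (glast (GS a t1)) t2 : gstring T S1).
Proof. by rewrite /glast /= map_cat last_cat. Qed.

Lemma foldF_shift l (z : gstring T S1) :
  foldl F (Some z) l =
  omap (fun r => GS (ghead z) (gtail z ++ gtail r)) (foldl F (Some (gatom S1 (glast z))) l).
Proof.
elim: l z => [|[[p b] w] l IH] [hz tz] /=; first by rewrite cats0.
rewrite /F /= /gcomp /= -/F.
case: eqP => Hw /=; last by rewrite foldF_None.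
case: eqP => Hb; case: eqP => Hb' /=; rewrite ?foldF_None //.
- rewrite IH [in RHS]IH /= !cats0 glast_cat.
  case: (foldl _ _ _) => //= r. by rewrite catA.
- by case: Hb'; rewrite -Hb glast_cat.
- by case: Hb; rewrite -Hb' glast_cat.
Qed.

Lemma compose_nil a ws : compose_all (GS a [::] : gstring T S0) ws = Some (gatom S1 a).
Proof. by case: ws. Qed.

Lemma compose_cons a p b tx (w : gstring T S1) ws :
  compose_all (GS a ((p, b) :: tx) : gstring T S0) (w :: ws) =
  if (a == ghead w) && (glast w == b) then
    omap (fun r => GS a (gtail w ++ gtail r)) (compose_all (GS b tx) ws)
  else None.
Proof.
rewrite /compose_all /= -/F /F /= /gcomp /= -/F.
case: eqP => Ha /=; last by rewrite foldF_None.
have E : glast (GS a (gtail w) : gstring T S1) = glast w.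
  by move: Ha; rewrite /glast /= => ->.
rewrite E; case: eqP => Hb /=; last by rewrite foldF_None.
by rewrite foldF_shift /= cats0 E Hb.
Qed.

Lemma compose_head (x : gstring T S0) (ws : seq (gstring T S1)) r : compose_all x ws = Some r -> ghead r = ghead x.
Proof.
rewrite /compose_all -/F foldF_shift. by case: (foldl _ _ _) => //= ? [<-].
Qed.

End Gen.

Section Aut.
Variables (T S0 S1 : finType) (s : S0 -> kat_aut T S1) (A : kat_aut T S0).

Inductive AP : (atom T -> res S0 (kstate A)) -> gstring T S1 -> Prop :=
| ap_acc g a : g a = Accept -> AP g (GS a [::])
| ap_step g a p q (w v : gstring T S1) : g a = Step p q -> L (s p) w -> ghead w = a ->
    AP (kdelta q) v -> ghead v = glast w -> AP g (GS a (gtail w ++ gtail v)).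

Definition APstep (r : res S0 (kstate A)) (a : atom T) (t : seq (S1 * atom T)) : Prop :=
  match r with
  | Accept => t = [::]
  | Reject => False
  | Step p q => exists (w v : gstring T S1), [/\ L (s p) w, ghead w = a, AP (kdelta q) v,
                   ghead v = glast w & t = gtail w ++ gtail v]
  end.

Lemma AP_unfold g a t : AP g (GS a t) <-> APstep (g a) a t.
Proof.
split.
  move=> H; inversion H; subst; rewrite /APstep;
   match goal with h : g _ = _ |- _ => rewrite h end => //.
  by exists w, v.
rewrite /APstep; case E: (g a) => [| |p q] //.
  by move=> ->; constructor.
by case=> w [v [H1 H2 H3 H4 ->]]; exact: (ap_step E H1 H2 H3 H4).
Qed.

Lemma L_acc p (w : gstring T S1) :
  L (s p) w -> is_accept (kiota (s p) (ghead w)) -> w = GS (ghead w) [::].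
Proof.
case: w => a [|[p0 b] t] //= /lang_cons [q [-> _]] //.
Qed.

Lemma skip p q a t : kiota (s p) a = Accept ->
  APstep (Step p q) a t <-> AP (kdelta q) (GS a t).
Proof.
move=> Hp; split.
  case=> w [v [H1 Ha H3 H4 ->]]; subst a.
  have Ew := L_acc H1; rewrite Hp in Ew; have {}Ew := Ew isT.
  move: Ew; clear Hp; case: w H1 H4 => a0 tw /= H1 H4 [Etw]; subst tw.
  by case: v H3 H4 => b tv /= Hv Hb; rewrite Hb in Hv.
move=> H; exists (GS a [::]), (GS a t); split => //.
by apply/lang_nil.
Qed.

Lemma fuel_uniq n m (q : kstate A) a r r' :
  hat_fuel s n q a = Some r -> hat_fuel s m q a = Some r' -> r = r'.
Proof.
elim: n m q => [|n IH] [|m] q //=.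
case: (kdelta q a) => [| |p q'].
- by move=> [<-] [<-].
- by move=> [<-] [<-].
case: (is_accept _).
  by apply: IH.
by move=> [<-] [<-].
Qed.

Lemma fuel_step n (q : kstate A) a p q' :
  hat_fuel s n q a = Some (Step p q') -> ~~ is_accept (kiota (s p) a).
Proof.
elim: n q => [|n IH] q //=.
case: (kdelta q a) => [| |p0 q0] //.
case E: (is_accept _).
  by apply: IH.
by move=> [<- _]; rewrite E.
Qed.

Lemma hat_cases (q : kstate A) a :
  (exists n, hat_fuel s n q a = Some (hat_delta s q a)) \/
  ((forall n, hat_fuel s n q a = None) /\ hat_delta s q a = Reject).
Proof.
rewrite /hat_delta; case: excluded_middle_informative => H.
  left; case: constructive_indefinite_description => [[n r] /= Hn].
  by exists n.
right; split => // n; case E: (hat_fuel s n q a) => [r|] //.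
by case: H; exists (n, r).
Qed.

Lemma hat_delta_step (q : kstate A) a p q' :
  hat_delta s q a = Step p q' -> ~~ is_accept (kiota (s p) a).
Proof.
case: (hat_cases q a) => [[n Hn] E|[_ ->]] //.
by rewrite E in Hn; apply: fuel_step Hn.
Qed.

Lemma fuel_AP n (q : kstate A) a r t : hat_fuel s n q a = Some r ->
  (AP (kdelta q) (GS a t) <-> APstep r a t).
Proof.
elim: n q r => [|n IH] q r //=.
rewrite AP_unfold.
case E: (kdelta q a) => [| |p q'].
- by move=> [<-].
- by move=> [<-].
case Ea: (is_accept _).
  move=> Hf; rewrite skip; first exact: IH.
  by move: Ea; case: (kiota _ a).
by move=> [<-].
Qed.

Lemma AP_term g y : AP g y -> forall q a t, g =1 kdelta q -> y = GS a t ->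
  exists n r, hat_fuel s n q a = Some r.
Proof.
elim=> {g y} [g a0 Ha|g a0 p q0 w v Hg Hw Hwa Hv IH Hvw] q a t Eg Ey.
  case: Ey => <- _; exists 1, Accept; by rewrite /= -Eg Ha.
case: Ey => <- Et.
case Ep: (is_accept (kiota (s p) a0)).
  have Ew := L_acc Hw; rewrite Hwa Ep in Ew; have {}Ew := Ew isT.
  move: Ew; clear Et; case: w Hw Hwa Hvw => a1 tw /= Hw -> Hvw [Etw]; subst tw.
  case: v Hv IH Hvw => b tv Hv IH /= Hb; subst b.
  have [n [r Hn]] := IH q0 a0 tv (fun _ => erefl) erefl.
  exists n.+1, r; by rewrite /= -Eg Hg Ep.
exists 1, (Step p q0); by rewrite /= -Eg Hg Ep.
Qed.

Lemma hat_AP (q : kstate A) a t : AP (kdelta q) (GS a t) <-> APstep (hat_delta s q a) a t.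
Proof.
case: (hat_cases q a) => [[n Hn]|[Hn ->]].
  exact: fuel_AP Hn.
split => // H.
have [n [r Hr]] := AP_term H (fun _ => erefl) erefl.
by rewrite Hn in Hr.
Qed.

Lemma hat_iota_AP a t : AP (kiota A) (GS a t) <-> APstep (@hat_iota T S0 S1 s A a) a t.
Proof.
rewrite AP_unfold /hat_iota.
case E: (kiota A a) => [| |p q] //.
case Ea: (is_accept _) => //.
rewrite skip; first exact: hat_AP.
by move: Ea; case: (kiota _ a).
Qed.

Lemma hat_iota_step a p q :
  @hat_iota T S0 S1 s A a = Step p q -> ~~ is_accept (kiota (s p) a).
Proof.
rewrite /hat_iota; case: (kiota A a) => [| |p0 q0] //.
case E: (is_accept _).
  exact: hat_delta_step.
by move=> [<- _]; rewrite E.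
Qed.

End Aut.

Section Aut3.
Variables (T S0 S1 : finType) (s : S0 -> kat_aut T S1) (A : kat_aut T S0).

Definition WL (p : S0) (g : atom T -> res S1 (kstate (s p))) (q : kstate A) a t :=
  exists (w v : gstring T S1), [/\ lang_from (@kdelta _ _ (s p)) g w, ghead w = a,
     AP s (kdelta q) v, ghead v = glast w & t = gtail w ++ gtail v].
Arguments WL : clear implicits.

Lemma APstep_WL p q a t : APstep s (Step p q) a t <-> WL p (kiota (s p)) q a t.
Proof. by []. Qed.

Lemma WL_unfold p g q a t : WL p g q a t <->
  match g a with
  | Step p'' qp' => exists b t', t = (p'', b) :: t' /\ WL p (kdelta qp') q b t'
  | Accept => AP s (kdelta q) (GS a t)
  | Reject => False
  end.
Proof.
split.
  case=> w [v [Hw Ha Hv Hvw ->]]; subst a.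
  case: w Hw Hvw => a [|[p0 b] tw] /= Hw Hvw.
    move/lang_nil: Hw => ->.
    by case: v Hv Hvw => b tv /= Hv Hb; rewrite Hb in Hv.
  case/lang_cons: Hw => qp' [-> Hw].
  exists b, (tw ++ gtail v); split => //.
  by exists (GS b tw), v.
case E: (g a) => [| |p'' qp'] //.
  move=> H; exists (GS a [::]), (GS a t); split => //.
  by apply/lang_nil.
case=> b [t' [-> [w [v [Hw Hb Hv Hvw ->]]]]].
exists (GS a ((p'', b) :: gtail w)), v; split => //.
apply/lang_cons; exists qp'; split => //.
by case: w Hw Hb Hvw => ? ? Hw /= <-.
by case: w Hw Hb Hvw => ? ? Hw /= <-.
Qed.

Definition mkst (p : S0) (qp : kstate (s p)) (q : kstate A) : cstate s A :=
  Tagged (fun p => (kstate (s p) * kstate A)%type) (qp, q).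

Lemma cdelta_mkst p (qp : kstate (s p)) (q : kstate A) a :
  cdelta (mkst qp q) a =
  match kdelta qp a with
  | Step p'' qp' => Step p'' (mkst qp' q)
  | Accept =>
    match hat_delta s q a with
    | Accept => Accept
    | Step p' q' =>
      match kiota (s p') a with
      | Step p'' qp'' => Step p'' (mkst qp'' q')
      | _ => Reject
      end
    | Reject => Reject
    end
  | Reject => Reject
  end.
Proof. by []. Qed.

Lemma C1 t : forall (p : S0) (qp : kstate (s p)) (q : kstate A) a,
  lang_from (@cdelta _ _ _ s A) (cdelta (mkst qp q)) (GS a t) <-> WL p (kdelta qp) q a t.
Proof.
elim: t => [|[p0 b] t IH] p qp q a.
  rewrite lang_nil WL_unfold cdelta_mkst.
  case E: (kdelta qp a) => [| |p'' qp'] //.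
  - rewrite hat_AP.
    case Eh: (hat_delta s q a) => [| |p' q'] //.
    have Hna := hat_delta_step Eh.
    rewrite APstep_WL WL_unfold.
    case Ei: (kiota (s p') a) => [| |p'' qp''] //.
    + by rewrite Ei in Hna.
    + by split => // [[b [t' [H _]]]].
  - by split => // [[b [t' [H _]]]].
rewrite lang_cons WL_unfold cdelta_mkst.
case E: (kdelta qp a) => [| |p'' qp'].
- rewrite hat_AP.
  case Eh: (hat_delta s q a) => [| |p' q'] //.
  + by split => // [[y [H _]]].
  + by split => // [[y [H _]]].
  have Hna := hat_delta_step Eh.
  rewrite APstep_WL WL_unfold.
  case Ei: (kiota (s p') a) => [| |p'' qp''] //.
  + by rewrite Ei in Hna.
  + by split => // [[y [H _]]].
  split.
    case=> y [[<- <-]]; rewrite -/(mkst qp'' q') IH => H.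
    by exists b, t.
  case=> b' [t' [[-> <- <-]]] H; exists (mkst qp'' q'); split => //.
  by rewrite IH.
- by split => // [[y [H _]]].
split.
  case=> y [[<- <-]]; rewrite -/(mkst qp' q) IH => H.
  by exists b, t.
case=> b' [t' [[-> <- <-]]] H; exists (mkst qp' q); split => //.
by rewrite IH.
Qed.

Lemma C2 a t : lang_from (@cdelta _ _ _ s A) (@ciota _ _ _ s A) (GS a t) <-> AP s (kiota A) (GS a t).
Proof.
rewrite hat_iota_AP.
case: t => [|[p0 b] t].
  rewrite lang_nil /ciota.
  case Eh: (@hat_iota T S0 S1 s A a) => [| |p' q] //.
  have Hna := hat_iota_step Eh.
  rewrite APstep_WL WL_unfold.
  case Ei: (kiota (s p') a) => [| |p'' qp''] //.
  + by rewrite Ei in Hna.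
  + by split => // [[b [t' [H _]]]].
rewrite lang_cons /ciota.
case Eh: (@hat_iota T S0 S1 s A a) => [| |p' q].
- by split => // [[y [H _]]].
- by split => // [[y [H _]]].
have Hna := hat_iota_step Eh.
rewrite APstep_WL WL_unfold.
case Ei: (kiota (s p') a) => [| |p'' qp''].
+ by rewrite Ei in Hna.
+ by split => // [[y [H _]]].
split.
  case=> y [[<- <-]]; rewrite -/(mkst qp'' q) C1 => H.
  by exists b, t.
case=> b' [t' [[-> <- <-]]] H; exists (mkst qp'' q); split => //.
by rewrite C1.
Qed.

End Aut3.

Section Aut4.
Variables (T S0 S1 : finType) (s : S0 -> kat_aut T S1) (A : kat_aut T S0).

Lemma APPLY (g : atom T -> res S0 (kstate A)) (y : gstring T S1) :
  (exists (x : gstring T S0) (ws : seq (gstring T S1)),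
    [/\ lang_from (@kdelta _ _ A) g x, size ws = size (gtail x),
        List.Forall (fun pw : (S0 * atom T) * gstring T S1 => L (s pw.1.1) pw.2) (zip (gtail x) ws)
      & compose_all x ws = Some y]) <-> AP s g y.
Proof.
split.
  case=> [[a tx] [ws [Hx Hs Hf Hc]]].
  elim: tx g a ws y Hx Hs Hf Hc => [|[p b] tx IH] g a [|w ws] y //= Hx Hs Hf Hc.
    rewrite compose_nil in Hc; case: Hc => <-.
    by rewrite /gatom; apply: ap_acc; move/lang_nil: Hx.
  case/List.Forall_cons_iff: Hf => /= Hw Hf.
  rewrite compose_cons in Hc.
  case: ifP Hc => // /andP [/eqP Ha /eqP Hb].
  case E: (compose_all _ ws) => [r|] //= [<-].
  case/lang_cons: Hx => q [Hg Hx].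
  have Hr := IH _ _ _ _ Hx (eq_add_S _ _ Hs) Hf E.
  apply: (ap_step Hg Hw) => //.
  by rewrite (compose_head E).
elim=> {g y} [g a Ha|g a p q w v Hg Hw Hwa Hv IH Hvw].
  exists (GS a [::]), [::]; split => //.
  by apply/lang_nil.
case: IH => [[b tx] [ws [Hx Hs Hf Hc]]].
exists (GS a ((p, b) :: tx)), (w :: ws); split => /=.
- by apply/lang_cons; exists q.
- by rewrite Hs.
- by constructor.
rewrite compose_cons Hc -Hwa -Hvw (compose_head Hc) !eqxx /=.
done.
Qed.

End Aut4.

Theorem proposition6p12 (T S0 S1 : finType) (A : kat_aut T S0)
  (s : S0 -> kat_aut T S1) :
  forall y : gstring T S1,
    L (compose s A) y <-> apply_subst (fun p => L (s p)) (L A) y.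
Proof.
move=> [a t].
rewrite /L /= C2 /apply_subst -APPLY.
done.
Qed.
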